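(* For every instance of (edge-weighted) online stochastic matching in the Poisson arrival model and every level $\ell\ge0$, the expected weight of a maximum-weight matching of the realized bipartite graph is at most the optimal value of the $\ell$-th level Poisson Matching LP.
   Context: Poisson arrival model: $I$ is a finite set of online types and $J$ a finite set of offline vertices, with edges $E\subseteq I\times J$ and weights $w_{ij}>0$. Type $i$ arrives by an independent Poisson process of rate $\lambda_i>0$ on $[0,1]$, and $\lambda_S=\sum_{i\in S}\lambda_i$. $P_k(\lambda)=e^{-\lambda}\sum_{m=0}^k\lambda^m/m!$ is the Poisson CDF. For $\ell\ge1$, the $\ell$-th level Poisson Matching LP is: maximize $\sum_{(i,j)\in E}w_{ij}x_{ij}$ subject to - $x_{ij}\ge0$; - $\sum_{j}x_{ij}\le\lambda_i$ for all $i\in I$; - for every $1\le m\le\ell$, every $S\subseteq I$ and every $T\subseteq J$ with $|T|=m$: $\sum_{i\in S}\sum_{j\in T}x_{ij}\le\sum_{k=1}^m(1-P_{k-1}(\lambda_S))$. Here $x_{ij}=0$ for non-edges. The $0$-th level is the matching LP: maximize $\sum w_{ij}x_{ij}$ subject to $\sum_jx_{ij}\le\lambda_i$, $\sum_ix_{ij}\le1$, and $x\ge0$. *)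

(* Defs.v *)
From HB Require Import structures.
From mathcomp Require Import all_boot all_order all_algebra.
From mathcomp Require Import all_classical all_reals.
From mathcomp Require Import all_analysis.
Set Implicit Arguments. Unset Strict Implicit. Unset Printing Implicit Defensive.
Import Order.TTheory GRing.Theory Num.Theory.
Local Open Scope classical_set_scope.
Local Open Scope ring_scope.

Section PoissonMatching.
Variables (R : realType) (I J : finType).

Definition poisson_cdf (k : nat) (lam : R) : R :=
  expR (- lam) * \sum_(m < k.+1) lam ^+ m / (m`!)%:R.

Definition lamS (lam : I -> R) (S : {set I}) : R := \sum_(i in S) lam i.

(** Feasibility for the l-th level Poisson Matching LP (l >= 1),
    and for the matching LP when l = 0.  Non-edges are forced to 0. *)
Definition PML_feasible (E : I -> J -> bool) (lam : I -> R) (l : nat)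
    (x : I -> J -> R) : Prop :=
  (forall i j, 0 <= x i j) /\
  (forall i j, ~~ E i j -> x i j = 0) /\
  (forall i, \sum_(j : J) x i j <= lam i) /\
  (if l == 0%N then forall j, \sum_(i : I) x i j <= 1
   else forall (m : nat) (S : {set I}) (T : {set J}),
     (1 <= m <= l)%N -> #|T| = m ->
     \sum_(i in S) \sum_(j in T) x i j
       <= \sum_(k < m) (1 - poisson_cdf k (lamS lam S))).

Definition PML_value (E : I -> J -> bool) (w : I -> J -> R) (lam : I -> R)
    (l : nat) : \bar R :=
  ereal_sup [set (\sum_(i : I) \sum_(j : J) w i j * x i j)%:E
            | x in PML_feasible E lam l].

(** Realized graph for arrival counts n : online vertices are pairs
    (i, k) with k < n i (the k-th arriving copy of type i). *)
Definition online_vertex (n : {ffun I -> nat}) := {i : I & 'I_(n i)}.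

Definition is_matching (E : I -> J -> bool) (n : {ffun I -> nat})
    (M : {ffun online_vertex n -> option J}) : bool :=
  [forall v, if M v is Some j then E (tag v) j else true] &&
  [forall v, forall v', [forall j, (M v == Some j) && (M v' == Some j) ==> (v == v')]].

Definition matching_weight (w : I -> J -> R) (n : {ffun I -> nat})
    (M : {ffun online_vertex n -> option J}) : R :=
  \sum_(v : online_vertex n) (if M v is Some j then w (tag v) j else 0).

Definition opt_matching (E : I -> J -> bool) (w : I -> J -> R)
    (n : {ffun I -> nat}) : R :=
  \big[Num.max/0]_(M : {ffun online_vertex n -> option J} | is_matching E M)
     matching_weight w M.

(** Expected optimum: counts N_i ~ Poisson(lam_i) independent over i
    (arrival times are irrelevant to the offline optimum). *)
Definition expected_opt (E : I -> J -> bool) (w : I -> J -> R)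
    (lam : I -> R) : \bar R :=
  \esum_(n in [set: {ffun I -> nat}])
     ((\prod_(i : I) poisson_pmf (lam i) (n i)) * opt_matching E w n)%:E.

End PoissonMatching.

(* Main.v *)
Require Import Defs.
From HB Require Import structures.
From mathcomp Require Import all_boot all_order all_algebra.
From mathcomp Require Import all_classical all_reals.
From mathcomp Require Import all_analysis.
From mathcomp Require Import ring lra zify.
Import Order.TTheory GRing.Theory Num.Theory.
Local Open Scope ring_scope.
Set Implicit Arguments. Unset Strict Implicit.

Lemma partial_exp_le (R : realType) (x : R) (M : nat) : 0 <= x ->
  \sum_(s < M) x ^+ s / (s`!)%:R <= expR x.
Proof.
move=> x0.
have -> : \sum_(s < M) x ^+ s / (s`!)%:R = series (exp_coeff x) M.
  by rewrite /series /= big_mkord.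
apply: nondecreasing_cvgn_le; last exact: is_cvg_series_exp_coeff.
apply: (@nondecreasing_series R (exp_coeff x) xpredT 0) => n _ _.
exact: exp_coeff_ge0.
Qed.
Section Q.
Variable R : realType.
Definition q (r : R) (k : nat) : R := r ^+ k / (k`!)%:R * expR (- r).

Lemma q_ge0 r k : 0 <= r -> 0 <= q r k.
Proof. by move=> r0; rewrite /q !mulr_ge0 ?invr_ge0 ?exprn_ge0 ?expR_ge0. Qed.

Lemma q0 k : q 0 k = (k == 0)%:R.
Proof. by rewrite /q oppr0 expR0 mulr1 expr0n; case: k => [|k] /=; rewrite ?mul0r // invr1 mulr1. Qed.

Lemma q_conv a b s : q (a + b) s = \sum_(j < s.+1) q a j * q b (s - j).
Proof.
rewrite /q [a + b]addrC exprDn mulr_suml mulr_suml.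
apply: eq_bigr => j _.
have hj := ltn_ord j.
rewrite -mulr_natr opprD expRD.
have bf := bin_fact (ltnSE hj).
have f1 : (j`!)%:R != 0 :> R by rewrite pnatr_eq0 -lt0n fact_gt0.
have f2 : ((s - j)`!)%:R != 0 :> R by rewrite pnatr_eq0 -lt0n fact_gt0.
have -> : (s`!)%:R = ('C(s, j))%:R * (j`!)%:R * ((s - j)`!)%:R :> R.
  by rewrite -!natrM -mulnA bf.
have c0 : ('C(s, j))%:R != 0 :> R.
  by rewrite pnatr_eq0 -lt0n bin_gt0 -ltnS.
field; rewrite c0 f1 f2 //.
Qed.

Lemma partial_q_le1 r M : 0 <= r -> \sum_(s < M) q r s <= 1.
Proof.
move=> r0.
rewrite /q -mulr_suml.
have e0 := expR_gt0 (- r).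
have H := @partial_exp_le R r M r0.
by apply: le_trans (ler_wpM2r (ltW e0) H) _; rewrite expRxMexpNx_1.
Qed.

Lemma partial_sq_le r M : 0 <= r -> \sum_(s < M) s%:R * q r s <= r.
Proof.
move=> r0; case: M => [|M]; first by rewrite big_ord0.
rewrite big_ord_recl /= mul0r add0r.
have -> : \sum_(i < M) (bump 0 i)%:R * q r (bump 0 i) = r * \sum_(i < M) q r i.
  rewrite mulr_sumr; apply: eq_bigr => i _.
  rewrite /bump /= add1n /q factS natrM exprS.
  have f1 : (i`!)%:R != 0 :> R by rewrite pnatr_eq0 -lt0n fact_gt0.
  have f2 : (i.+1)%:R != 0 :> R by rewrite pnatr_eq0.
  by field; rewrite f1 addrC natr1 f2.
by apply: ler_piMr => //; apply: partial_q_le1.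
Qed.

Lemma cdfE k r : poisson_cdf k r = \sum_(s < k.+1) q r s.
Proof. by rewrite /poisson_cdf mulr_sumr; apply: eq_bigr => s _; rewrite /q mulrC. Qed.

Lemma tail_q r k M : 0 <= r ->
  \sum_(s < M) (k < s)%N%:R * q r s <= 1 - poisson_cdf k r.
Proof.
move=> r0; rewrite cdfE.
case: (leqP M k) => hM.
  rewrite big1 ?subr_ge0 ?partial_q_le1 // => s _.
  by rewrite ltnNge (leq_trans (ltnW (ltn_ord s)) hM) mul0r.
rewrite lerBrDr.
apply: le_trans (@partial_q_le1 r M r0).
rewrite (big_ord_widen M (fun s => q r s) hM) [X in _ + X]big_mkcond -big_split /=.
apply: ler_sum => s _; rewrite ltnS; case: leqP => _; rewrite ?mul1r ?mul0r ?add0r ?addr0 //.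
Qed.
End Q.

Lemma sum_tag (R : realType) (I : finType) (n : I -> nat) (F : {i : I & 'I_(n i)} -> R) :
  \sum_(v : {i : I & 'I_(n i)}) F v = \sum_i \sum_(k < n i) F (Tagged (fun i => 'I_(n i)) k).
Proof.
have -> : index_enum {i : I & 'I_(n i)} = tag_enum (fun i => 'I_(n i)).
  by rewrite /index_enum !unlock.
rewrite /tag_enum big_flatten /= big_map.
have -> : index_enum I = Finite.enum I by rewrite /index_enum unlock.
apply: eq_bigr => i _; rewrite big_map.
have -> : index_enum 'I_(n i) = Finite.enum 'I_(n i) by rewrite /index_enum unlock.
by [].
Qed.

Lemma sum_delta (R : realType) (T : finType) (P : pred T) (f : T -> R) (x : T) :
  \sum_(i | P i) (x == i)%:R * f i = (P x)%:R * f x.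
Proof.
case: (boolP (P x)) => hx.
  rewrite (bigD1 x) //= eqxx mul1r big1 ?addr0 ?mul1r // => i /andP[_ hi].
  by rewrite eq_sym (negbTE hi) mul0r.
rewrite mul0r big1 // => i hi; case: eqP => [e|_]; last by rewrite mul0r.
by move: hx; rewrite e hi.
Qed.

Section Match.
Variables (R : realType) (I J : finType) (E : I -> J -> bool) (w : I -> J -> R)
  (n : {ffun I -> nat}) (M : {ffun online_vertex n -> option J}).

Definition cnt i j : R :=
  \sum_(v : online_vertex n) ((tag v == i) && (M v == Some j))%:R.

Lemma cnt_ge0 i j : 0 <= cnt i j.
Proof. by apply: sumr_ge0 => v _; rewrite ler0n. Qed.

Lemma sumV_tag (P : pred I) :
  \sum_(v : online_vertex n) (P (tag v))%:R = \sum_(i | P i) (n i)%:R :> R.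
Proof.
rewrite /online_vertex sum_tag /= [RHS]big_mkcond; apply: eq_bigr => i _.
rewrite sumr_const card_ord; case: (P i); by rewrite ?mul1rn ?mul0rn.
Qed.

Lemma sum_some (o : option J) (T : pred J) : \sum_(j | T j) (o == Some j)%:R <= 1 :> R.
Proof.
case: o => [j0|]; last by rewrite big1.
have := @sum_delta R J T (fun _ => 1) j0.
under eq_bigr do rewrite mulr1.
move=> ->; rewrite mulr1; case: (T j0) => //.
Qed.

Lemma cnt_setE (P : pred I) j :
  \sum_(i | P i) cnt i j = \sum_(v : online_vertex n) ((P (tag v)) && (M v == Some j))%:R.
Proof.
rewrite /cnt exchange_big /=; apply: eq_bigr => v _.
case: (M v == Some j); last by rewrite andbF big1 // => i _; rewrite andbF.
under eq_bigr do rewrite andbT -[(_ == _)%:R]mulr1.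
by rewrite sum_delta andbT mulr1.
Qed.

Hypothesis hM : is_matching E M.

Lemma match_inj v v' j : M v = Some j -> M v' = Some j -> v = v'.
Proof.
move: hM => /andP[_ /forallP H] h1 h2.
have := H v => /forallP /(_ v') /forallP /(_ j).
by rewrite h1 h2 eqxx /= => /eqP.
Qed.

Lemma match_edge v j : M v = Some j -> E (tag v) j.
Proof. by move: hM => /andP[/forallP /(_ v) + _] h; rewrite h. Qed.

Lemma sum_off j : \sum_(v : online_vertex n) (M v == Some j)%:R <= 1 :> R.
Proof.
case: (boolP [exists v, M v == Some j]) => [/existsP [v0 /eqP h0]|].
  rewrite (bigD1 v0) //= h0 eqxx big1 ?addr0 // => v hv.
  case: eqP => [/match_inj e|]; last by [].
  by move: hv; rewrite (e _ h0) eqxx.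
by rewrite negb_exists => /forallP H; rewrite big1 // => v _; rewrite (negbTE (H v)).
Qed.

Lemma cnt_bound1 (P : pred I) (T : pred J) :
  \sum_(i | P i) \sum_(j | T j) cnt i j <= (\sum_(i | P i) n i)%:R.
Proof.
rewrite exchange_big /=.
under eq_bigr do rewrite cnt_setE.
rewrite exchange_big /= natr_sum -sumV_tag; apply: ler_sum => v _.
case: (P (tag v)) => /=; last by rewrite big1.
exact: sum_some.
Qed.

Lemma cnt_bound2 (P : pred I) (T : {set J}) :
  \sum_(i | P i) \sum_(j in T) cnt i j <= #|T|%:R.
Proof.
rewrite exchange_big /=.
under eq_bigr do rewrite cnt_setE.
rewrite -sum1_card natr_sum; apply: ler_sum => j _.
apply: le_trans (sum_off j); apply: ler_sum => v _.
by case: (P (tag v)).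
Qed.

Lemma cnt_nonedge i j : ~~ E i j -> cnt i j = 0.
Proof.
move=> hE; rewrite /cnt big1 // => v _.
case: eqP => [ti|] /=; last by [].
case: eqP => [/match_edge|] //=; rewrite ti (negbTE hE) //.
Qed.

Lemma weightE : matching_weight w M = \sum_i \sum_j w i j * cnt i j.
Proof.
rewrite /matching_weight /cnt.
under [RHS]eq_bigr do under eq_bigr do rewrite mulr_sumr.
under [RHS]eq_bigr do rewrite exchange_big /=.
rewrite exchange_big /=; apply: eq_bigr => v _.
rewrite exchange_big /=.
case: (M v) => [j0|]; last by rewrite big1 // => j _; rewrite big1 // => i _; rewrite andbF mulr0.
rewrite (bigD1 j0) //= [X in _ + X]big1 ?addr0; last first.
  move=> j hj; rewrite big1 // => i _.
  rewrite (_ : (Some j0 == Some j) = false) ?andbF ?mulr0 //.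
  by apply/negbTE; rewrite (inj_eq (@Some_inj _)) eq_sym.
rewrite eqxx.
under eq_bigr do rewrite andbT mulrC.
by rewrite sum_delta mul1r.
Qed.
End Match.

Section Dom.
Variable R : realType.

Definition dom (A : {poly R}) (r : R) := forall s, 0 <= A`_s /\ A`_s <= q r s.

Lemma dom_mul A B a b : 0 <= a -> 0 <= b -> dom A a -> dom B b -> dom (A * B) (a + b).
Proof.
move=> a0 b0 dA dB s; rewrite coefM q_conv; split.
  apply: sumr_ge0 => j _; have [h1 _] := dA j; have [h2 _] := dB (s - j)%N.
  exact: mulr_ge0.
apply: ler_sum => j _; have [h1 h3] := dA j; have [h2 h4] := dB (s - j)%N.
exact: ler_pM.
Qed.

Lemma dom1 : dom 1 0.
Proof. by move=> s; rewrite coef1 q0; split. Qed.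

Lemma pmf_q (r : R) k : 0 < r -> poisson_pmf r k = q r k.
Proof. by move=> r0; rewrite /poisson_pmf r0. Qed.

Lemma sum_ord_delta K (f : nat -> R) (s : nat) : (forall c, 0 <= f c) ->
  \sum_(c < K) f c * (s == (c : nat))%:R <= f s.
Proof.
move=> f0; case: (ltnP s K) => hs.
  rewrite (bigD1 (Ordinal hs)) //= eqxx mulr1 big1 ?addr0 // => c hc.
  have hsc : (s == c) = false.
    apply/negbTE; apply: contra hc => /eqP e; apply/eqP/val_inj => /=; by rewrite -e.
  by rewrite hsc mulr0.
rewrite big1 // => c _.
by rewrite (_ : (s == c) = false) ?mulr0 //; apply/negbTE; rewrite neq_ltn (leq_trans (ltn_ord c) hs) orbT.
Qed.

Variables (I : finType) (lam : I -> R) (hlam : forall i, 0 < lam i) (K : nat).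

Definition pr (g : {ffun I -> 'I_K}) := \prod_i poisson_pmf (lam i) (g i).
Definition NS (S : {set I}) (g : {ffun I -> 'I_K}) : nat := \sum_(i in S) (g i : nat).

Lemma pr_ge0 g : 0 <= pr g.
Proof. by apply: prodr_ge0 => i _; apply: poisson_pmf_ge0. Qed.

Lemma key (S : {set I}) s :
  \sum_(g : {ffun I -> 'I_K}) pr g * (NS S g == s)%:R <= q (lamS lam S) s.
Proof.
pose Q i := \sum_(c : 'I_K) poisson_pmf (lam i) c *: ('X^(if i \in S then (c : nat) else 0) : {poly R}).
have GE : \prod_i Q i = \sum_(g : {ffun I -> 'I_K}) pr g *: 'X^(NS S g).
  rewrite /Q bigA_distr_bigA /=; apply: eq_bigr => g _.
  rewrite scaler_prod /pr /NS; congr (_ *: _).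
  rewrite (big_morph (fun n => 'X^n : {poly R}) (exprD 'X) (expr0 'X)).
  by rewrite [RHS]big_mkcond; apply: eq_bigr => i _; case: (i \in S).
have -> : \sum_(g : {ffun I -> 'I_K}) pr g * (NS S g == s)%:R = (\prod_i Q i)`_s.
  by rewrite GE coef_sum; apply: eq_bigr => g _; rewrite coefZ coefXn eq_sym.
rewrite /lamS [\sum_(i in S) lam i]big_mkcond /=.
suff : dom (\prod_i Q i) (\sum_i (if i \in S then lam i else 0)) by move=> /(_ s) [].
pose Kr (r : R) (A : {poly R}) := 0 <= r /\ dom A r.
suff [] : Kr (\sum_i (if i \in S then lam i else 0)) (\prod_i Q i) by [].
apply: (big_rec2 Kr); first by split => //; apply: dom1.
move=> i r A _ [r0 dA]; split.
  by apply: addr_ge0 => //; case: ifP => // _; apply: ltW.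
apply: dom_mul => //; first by case: ifP => // _; apply: ltW.
move=> t; rewrite /Q coef_sum.
have hc : forall c : 'I_K, 0 <= poisson_pmf (lam i) c by move=> c; apply: poisson_pmf_ge0.
split.
  by apply: sumr_ge0 => c _; rewrite coefZ coefXn mulr_ge0.
case: ifP => iS.
  under eq_bigr do rewrite coefZ coefXn pmf_q //.
  apply: sum_ord_delta => c.
  exact/q_ge0/ltW.
under eq_bigr do rewrite coefZ coefXn eq_sym.
rewrite -mulr_suml q0 mulrC eq_sym.
case: (t == 0); last by rewrite mul0r.
rewrite mul1r.
under eq_bigr do rewrite pmf_q //.
exact/partial_q_le1/ltW.
Qed.

Lemma NS_lt (S : {set I}) g : (NS S g < (\sum_(i : I) K).+1)%N.
Proof.
rewrite ltnS /NS big_mkcond /=; apply: leq_sum => i _.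
by case: (i \in S) => //; apply: ltnW.
Qed.

Lemma sum_phi (S : {set I}) (phi : nat -> R) : (forall s, 0 <= phi s) ->
  \sum_(g : {ffun I -> 'I_K}) pr g * phi (NS S g) <=
  \sum_(s < (\sum_(i : I) K).+1) phi s * q (lamS lam S) s.
Proof.
move=> phi0.
have -> : \sum_(g : {ffun I -> 'I_K}) pr g * phi (NS S g) =
   \sum_(s < (\sum_(i : I) K).+1) phi s * \sum_(g : {ffun I -> 'I_K}) pr g * (NS S g == s)%:R.
  under [RHS]eq_bigr do rewrite mulr_sumr.
  rewrite exchange_big /=; apply: eq_bigr => g _.
  have := @sum_delta R _ xpredT (fun s : 'I_(\sum_(i : I) K).+1 => phi s * pr g) (Ordinal (NS_lt S g)).
  rewrite /= mul1r mulrC => <-; apply: eq_bigr => s _.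
  have -> : (Ordinal (NS_lt S g) == s) = (NS S g == s) by [].
  ring.
apply: ler_sum => s _; apply: ler_wpM2l => //; exact: key.
Qed.
End Dom.

Lemma minn_sum (R : realType) (s m : nat) : (minn s m)%:R = \sum_(k < m) (k < s)%N%:R :> R.
Proof.
elim: m => [|m IH]; first by rewrite big_ord0 minn0.
rewrite big_ord_recr /= -IH -natrD; congr (_%:R).
case: (ltnP m s) => h.
  by rewrite !minnE !subnE; lia.
by rewrite !minnE; lia.
Qed.

Section Opt.
Variables (R : realType) (I J : finType) (E : I -> J -> bool) (w : I -> J -> R).

Lemma empty_matching (n : {ffun I -> nat}) : is_matching E ([ffun _ => None] : {ffun online_vertex n -> option J}).
Proof.
apply/andP; split; apply/forallP => v; rewrite ?ffunE //.
by apply/forallP => v'; apply/forallP => j; rewrite !ffunE.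
Qed.

Lemma opt_attained (n : {ffun I -> nat}) :
  exists2 M : {ffun online_vertex n -> option J}, is_matching E M & opt_matching E w n = matching_weight w M.
Proof.
rewrite /opt_matching.
apply: (big_ind (fun x => exists2 M : {ffun online_vertex n -> option J}, is_matching E M & x = matching_weight w M)).
- exists [ffun _ => None]; first exact: empty_matching.
  by rewrite /matching_weight big1 // => v _; rewrite ffunE.
- move=> x y [M1 h1 e1] [M2 h2 e2]; case: (lerP x y) => hxy.
    by exists M2.
  by exists M1.
- by move=> M hM; exists M.
Qed.

Definition Mopt (n : {ffun I -> nat}) : {ffun online_vertex n -> option J} :=
  if [pick M | is_matching E M && (matching_weight w M == opt_matching E w n)] is Some M then M
  else [ffun _ => None].

Lemma Mopt_spec n : is_matching E (Mopt n) /\ matching_weight w (Mopt n) = opt_matching E w n.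
Proof.
rewrite /Mopt; case: pickP => [M /andP[h /eqP e]|H] //.
have [M hM e] := opt_attained n.
by move: (H M); rewrite hM e eqxx.
Qed.
End Opt.

Definition nof (I : finType) K (g : {ffun I -> 'I_K}) : {ffun I -> nat} := [ffun i => (g i : nat)].

Lemma sum_count (R : realType) (T : eqType) (s : seq T) (x : T) : uniq s ->
  \sum_(n <- s) (x == n)%:R <= 1 :> R.
Proof.
move=> us.
have -> : \sum_(n <- s) (x == n)%:R = (count_mem x s)%:R :> R.
  elim: s us => [|a s IH] /=; first by rewrite big_nil.
  move=> /andP[_ us]; rewrite big_cons IH // natrD eq_sym.
  by case: (a == x).
by rewrite count_uniq_mem //; case: (x \in s).
Qed.

Lemma box_bound (R : realType) (I : finType) (K : nat) (f : {ffun I -> nat} -> R)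
  (s : seq {ffun I -> nat}) : (forall n, 0 <= f n) -> uniq s ->
  (forall n, n \in s -> forall i, (n i < K.+1)%N) ->
  \sum_(n <- s) f n <= \sum_(g : {ffun I -> 'I_K.+1}) f (nof g).
Proof.
move=> f0 us hs.
rewrite (eq_big_seq (fun n => \sum_(g : {ffun I -> 'I_K.+1}) (nof g == n)%:R * f (nof g))); last first.
  move=> n hn; pose g0 : {ffun I -> 'I_K.+1} := [ffun i => inord (n i)].
  have e : forall g : {ffun I -> 'I_K.+1}, (nof g == n) = (g0 == g).
    move=> g; apply/eqP/eqP => [E'|E']; apply/ffunP => i.
      by rewrite /g0 -E' !ffunE inord_val.
    by rewrite -E' /g0 !ffunE inordK // hs.
  under eq_bigr do rewrite e.
  rewrite (@sum_delta R _ xpredT (fun g => f (nof g)) g0) /= mul1r.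
  have : nof g0 == n by rewrite e.
  by move/eqP => ->.
rewrite exchange_big /=; apply: ler_sum => g _.
rewrite -mulr_suml; apply: ler_piMl => //.
exact: sum_count.
Qed.

Section Main.
Variables (R : realType) (I J : finType) (E : I -> J -> bool) (w : I -> J -> R) (lam : I -> R)
  (hlam : forall i, 0 < lam i) (l : nat).

Definition xK K i j : R :=
  \sum_(g : {ffun I -> 'I_K}) pr lam g * cnt R (Mopt E w (nof g)) i j.

Lemma NS_nof K (S : {set I}) (g : {ffun I -> 'I_K}) : \sum_(i in S) nof g i = NS S g.
Proof. by apply: eq_bigr => i _; rewrite ffunE. Qed.

Lemma lamS_ge0 S : 0 <= lamS lam S.
Proof. by apply: sumr_ge0 => i _; apply: ltW. Qed.

Lemma feas K : PML_feasible E lam l (xK K).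
Proof.
have hm (g : {ffun I -> 'I_K}) := (Mopt_spec E w (nof g)).1.
split.
  move=> i j; apply: sumr_ge0 => g _; apply: mulr_ge0; [exact: pr_ge0|exact: cnt_ge0].
split.
  move=> i j hE; rewrite /xK big1 // => g _; by rewrite (cnt_nonedge R (hm g)) ?mulr0.
split.
  move=> i; rewrite /xK exchange_big /=.
  under eq_bigr do rewrite -mulr_sumr.
  apply: (@le_trans _ _ (\sum_(g : {ffun I -> 'I_K}) pr lam g * (NS [set i] g)%:R)).
    apply: ler_sum => g _; apply: ler_wpM2l; first exact: pr_ge0.
    have := cnt_bound1 R (Mopt E w (nof g)) (pred1 i) predT.
    rewrite big_pred1_eq big_pred1_eq /NS big_set1 ffunE.
    by apply: le_trans; rewrite le_eqVlt; apply/orP; left; apply/eqP; apply: eq_bigr.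
  apply: le_trans; first by apply: (sum_phi hlam K [set i] (phi := fun s : nat => s%:R)) => s; exact: ler0n.
  rewrite /lamS big_set1.
  exact/partial_sq_le/ltW.
case: eqP => [_|_].
  move=> j; rewrite /xK exchange_big /=.
  under eq_bigr do rewrite -mulr_sumr.
  apply: (@le_trans _ _ (\sum_(g : {ffun I -> 'I_K}) pr lam g * 1)).
    apply: ler_sum => g _; apply: ler_wpM2l; first exact: pr_ge0.
    have := cnt_bound2 R (hm g) predT [set j].
    rewrite cards1.
    by under eq_bigr do rewrite big_set1.
  apply: le_trans; first by apply: (sum_phi hlam K [set: I] (phi := fun s : nat => 1)) => s; exact: ler01.
  apply: le_trans; last exact: (partial_q_le1 (\sum_(i : I) K).+1 (lamS_ge0 [set: I])).
  by apply: ler_sum => s _; rewrite /= mul1r.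
move=> m S T _ hT.
have -> : \sum_(i in S) \sum_(j in T) xK K i j =
    \sum_(g : {ffun I -> 'I_K}) pr lam g * \sum_(i in S) \sum_(j in T) cnt R (Mopt E w (nof g)) i j.
  rewrite /xK; under eq_bigr do rewrite exchange_big /=.
  rewrite exchange_big /=; apply: eq_bigr => g _.
  rewrite mulr_sumr; apply: eq_bigr => i _; by rewrite mulr_sumr.
apply: (@le_trans _ _ (\sum_(g : {ffun I -> 'I_K}) pr lam g * (minn (NS S g) m)%:R)).
  apply: ler_sum => g _; apply: ler_wpM2l; first exact: pr_ge0.
  have b1 := cnt_bound1 R (Mopt E w (nof g)) (mem S) (mem T).
  have b2 := cnt_bound2 R (hm g) (mem S) T.
  rewrite hT in b2; rewrite NS_nof in b1.
  rewrite /minn; case: ifP => _; [exact: b1|exact: b2].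
apply: le_trans; first by apply: (sum_phi hlam K S (phi := fun s : nat => (minn s m)%:R)) => s; exact: ler0n.
cbv beta.
rewrite (eq_bigr (fun s : 'I_(_) => \sum_(k < m) (k < s)%N%:R * q (lamS lam S) s)); last first.
  by move=> s _; rewrite (minn_sum R) mulr_suml.
rewrite exchange_big /=; apply: ler_sum => k _.
exact/tail_q/lamS_ge0.
Qed.

Lemma opt_ge0 n : 0 <= opt_matching E w n.
Proof.
rewrite /opt_matching; elim/big_rec: _ => // M x _ hx.
by rewrite le_max hx orbT.
Qed.

Lemma objE K : \sum_i \sum_j w i j * xK K i j =
  \sum_(g : {ffun I -> 'I_K}) pr lam g * opt_matching E w (nof g).
Proof.
rewrite /xK.
under eq_bigr do under eq_bigr do rewrite mulr_sumr.
under eq_bigr do rewrite exchange_big /=.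
rewrite exchange_big /=; apply: eq_bigr => g _.
rewrite -(Mopt_spec E w (nof g)).2 weightE mulr_sumr; apply: eq_bigr => i _.
rewrite mulr_sumr; apply: eq_bigr => j _; ring.
Qed.
End Main.

Unset Implicit Arguments. Set Strict Implicit.

Theorem mainTheorem7 (R : realType) (I J : finType)
  (E : I -> J -> bool) (w : I -> J -> R) (lam : I -> R)
  (hw : forall i j, E i j -> 0 < w i j)
  (hlam : forall i, 0 < lam i) (l : nat) :
  (expected_opt E w lam <= PML_value E w lam l)%E.
Proof.
rewrite /expected_opt /esum.
apply: ge_ereal_sup => _ [X [finX _] <-].
rewrite fsbig_finite //= sumEFin.
set s := finmap.enum_fset (fset_set X).
pose K := (\max_(n <- s) \max_i n i)%N.
apply: (@le_trans _ _ ((\sum_(g : {ffun I -> 'I_K.+1}) pr lam g * opt_matching E w (nof g))%:E)).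
  rewrite lee_fin.
  apply: le_trans.
    apply: (box_bound (K := K) (f := fun n => (\prod_i poisson_pmf (lam i) (n i)) * opt_matching E w n)).
    - move=> n; apply: mulr_ge0; last exact: opt_ge0.
      by apply: prodr_ge0 => i _; apply: poisson_pmf_ge0.
    - exact: finmap.fset_uniq.
    - move=> n hn i; rewrite ltnS.
      apply: leq_trans (@leq_bigmax_seq _ s xpredT (fun n : {ffun I -> nat} => \max_i n i) n hn isT).
      exact: (leq_bigmax (F := fun i => n i)).
  rewrite le_eqVlt; apply/orP; left; apply/eqP; apply: eq_bigr => g _.
  congr (_ * _); apply: eq_bigr => i _; by rewrite ffunE.
rewrite -objE.
apply: ereal_sup_ubound; exists (xK E w lam K.+1) => //.
exact: feas.
Qed.
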